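(* Let $K$ be a characteristic kernel on $\mathcal S=\{1,\ldots,M\}$ ($M\ge2$), let $\pi_1,\dots,\pi_M\in(0,1)$ with $\sum_i\pi_i=1$, and let $P_1,\ldots,P_M$ be probability measures on a measurable space $\mathcal{Z}$. Then the KMD $\eta=\eta(P_1,\ldots,P_M)$ satisfies: (i) $\eta\in[0,1]$; (ii) $\eta=0$ if and only if $P_1=\cdots=P_M$; (iii) $\eta=1$ if and only if $P_1,\ldots,P_M$ are mutually singular, i.e. there exist pairwise disjoint measurable sets $A_1,\ldots,A_M$ with $P_i(A_i)=1$ for $i=1,\ldots,M$.
   Context: A kernel on $\mathcal S=\{1,\ldots,M\}$ is a symmetric function $K:\mathcal S\times\mathcal S\to\mathbb R$ such that the matrix $[K(i,j)]_{i,j=1}^M$ is positive semidefinite; it is characteristic if $\sum_{i,j=1}^M\alpha_i\alpha_jK(i,j)>0$ for every nonzero $(\alpha_1,\ldots,\alpha_M)\in\mathbb R^M$ with $\sum_i\alpha_i=0$. Given $P_1,\dots,P_M$ and $\pi$, let $(\tilde Z,\tilde\Delta)$ be a random pair with $\mathbb P(\tilde\Delta=i)=\pi_i$ and conditional law of $\tilde Z$ given $\tilde\Delta=i$ equal to $P_i$; let $(\tilde Z_1,\tilde\Delta_1),(\tilde Z_2,\tilde\Delta_2)$ be i.i.d. copies of $(\tilde Z,\tilde\Delta)$; and let $\tilde\Delta'$ be a random variable such that $(\tilde Z,\tilde\Delta')$ has the same law as $(\tilde Z,\tilde\Delta)$ and $\tilde\Delta,\tilde\Delta'$ are conditionally independent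 given $\tilde Z$. The kernel measure of multi-sample dissimilarity (KMD) is $$\eta(P_1,\ldots,P_M)=\frac{\mathbb E[K(\tilde\Delta,\tilde\Delta')]-\mathbb E[K(\tilde\Delta_1,\tilde\Delta_2)]}{\mathbb E[K(\tilde\Delta,\tilde\Delta)]-\mathbb E[K(\tilde\Delta_1,\tilde\Delta_2)]}.$$ *)

(* Defs.v *)
From HB Require Import structures.
From mathcomp Require Import all_boot all_order all_algebra.
From mathcomp Require Import all_classical all_reals all_analysis.
Set Implicit Arguments. Unset Strict Implicit. Unset Printing Implicit Defensive.
Import Order.TTheory GRing.Theory Num.Theory.
Local Open Scope ring_scope.
Local Open Scope classical_set_scope.

Definition is_kernel (R : realType) (M : nat) (K : 'I_M -> 'I_M -> R) : Prop :=
  (forall i j, K i j = K j i) /\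
  (forall a : 'I_M -> R, 0 <= \sum_(i < M) \sum_(j < M) a i * a j * K i j).

Definition characteristic_kernel (R : realType) (M : nat)
    (K : 'I_M -> 'I_M -> R) : Prop :=
  is_kernel K /\
  (forall a : 'I_M -> R, (exists i, a i != 0) -> \sum_(i < M) a i = 0 ->
     0 < \sum_(i < M) \sum_(j < M) a i * a j * K i j).

(* p i z is (a version of) the conditional probability P(Delta~ = i | Z~ = z),
   where (Z~, Delta~) has P(Delta~ = i) = pi i and Z~ | Delta~ = i ~ P i.
   Defining property: for every measurable A,
     P(Delta~ = i, Z~ \in A) = E[p i (Z~) ; Z~ \in A],
   where the law of Z~ is the mixture sum_k pi_k P_k. *)
Definition cond_label_prob d (T : measurableType d) (R : realType) (M : nat)
    (pi : 'I_M -> R) (P : 'I_M -> probability T R) (p : 'I_M -> T -> R) : Prop :=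
  (forall i, measurable_fun setT (p i)) /\
  (forall i x, 0 <= p i x <= 1) /\
  (forall i (A : set T), measurable A ->
     ((pi i)%:E * P i A =
      \sum_(k < M) (pi k)%:E * \int[P k]_(x in A) (p i x)%:E)%E).

(* E[K(Delta~, Delta~')] where Delta~, Delta~' are conditionally independent
   given Z~, each with conditional law p . (Z~):
   = E[ sum_{i,j} K(i,j) p_i(Z~) p_j(Z~) ], Z~ ~ sum_k pi_k P_k. *)
Definition EK_cond d (T : measurableType d) (R : realType) (M : nat)
    (K : 'I_M -> 'I_M -> R) (pi : 'I_M -> R) (P : 'I_M -> probability T R)
    (p : 'I_M -> T -> R) : R :=
  \sum_(k < M) pi k *
    fine (\int[P k]_x (\sum_(i < M) \sum_(j < M) K i j * p i x * p j x)%:E)%E.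

Definition EK_diag (R : realType) (M : nat) (K : 'I_M -> 'I_M -> R)
    (pi : 'I_M -> R) : R :=
  \sum_(i < M) pi i * K i i.

Definition EK_indep (R : realType) (M : nat) (K : 'I_M -> 'I_M -> R)
    (pi : 'I_M -> R) : R :=
  \sum_(i < M) \sum_(j < M) pi i * pi j * K i j.

Definition KMD d (T : measurableType d) (R : realType) (M : nat)
    (K : 'I_M -> 'I_M -> R) (pi : 'I_M -> R) (P : 'I_M -> probability T R)
    (p : 'I_M -> T -> R) : R :=
  (EK_cond K pi P p - EK_indep K pi) / (EK_diag K pi - EK_indep K pi).

(* Main.v *)
Require Import Defs.
From HB Require Import structures.
From mathcomp Require Import all_boot all_order all_algebra.
From mathcomp Require Import all_classical all_reals all_analysis.
From mathcomp Require Import measurable_realfun.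
From mathcomp Require Import ring lra.
Set Implicit Arguments. Unset Strict Implicit. Unset Printing Implicit Defensive.
Import Order.TTheory GRing.Theory Num.Theory.
Local Open Scope ring_scope.
Local Open Scope classical_set_scope.

Section gen.
Context d (T : measurableType d) (R : realType).

Definition good (f : T -> R) :=
  measurable_fun setT f /\ exists c : R, forall x, `|f x| <= c.

Lemma good_cst c : good (fun=> c).
Proof. by split; [exact: measurable_cst | exists `|c|]. Qed.

Lemma goodD f g : good f -> good g -> good (fun x => f x + g x).
Proof.
move=> [mf [a ha]] [mg [b hb]]; split; first exact: measurable_realfun.measurable_funD.
by exists (a + b) => x; apply: le_trans (ler_normD _ _) _; apply: lerD.
Qed.

Lemma goodM f g : good f -> good g -> good (fun x => f x * g x).
Proof.
move=> [mf [a ha]] [mg [b hb]]; split; first exact: measurable_realfun.measurable_funM.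
exists (a * b) => x; rewrite normrM; apply: ler_pM => //.
Qed.

Lemma goodN f : good f -> good (fun x => - f x).
Proof.
move=> [mf [a ha]]; split; first exact: measurableT_comp.
by exists a => x; rewrite normrN.
Qed.

Lemma good_sum (I : Type) (s : seq I) (Q : pred I) (F : I -> T -> R) :
  (forall i, Q i -> good (F i)) -> good (fun x => \sum_(i <- s | Q i) F i x).
Proof.
move=> hF; elim: s => [|a s ih].
  rewrite (_ : (fun x => _) = fun=> 0); first exact: good_cst.
  by apply/funext => x; rewrite big_nil.
case: (boolP (Q a)) => Qa.
  rewrite (_ : (fun x => _) = fun x => F a x + \sum_(i <- s | Q i) F i x).
    exact: goodD (hF _ Qa) ih.
  by apply/funext => x; rewrite big_cons Qa.
rewrite (_ : (fun x => _) = fun x => \sum_(i <- s | Q i) F i x) //.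
by apply/funext => x; rewrite big_cons (negbTE Qa).
Qed.

Lemma good_indic (A : set T) : measurable A -> good (fun x => \1_A x : R).
Proof.
move=> mA; split; first exact: measurable_realfun.measurable_indic.
by exists 1 => x; rewrite indicE; case: (x \in A); rewrite ?normr1 ?normr0.
Qed.

Variable mu : probability T R.

Lemma muT : (mu : {measure set T -> \bar R}) setT = 1%E.
Proof. exact: probability_setT. Qed.

Lemma good_int f : good f -> mu.-integrable setT (EFin \o f).
Proof.
move=> [mf [c hc]]; apply/integrableP; split; first exact/measurable_EFinP.
apply: (@le_lt_trans _ _ (\int[mu]_(x in setT) (cst c%:E) x)%E).
  apply: ge0_le_integral => //.
  - by do 2 apply: measurableT_comp => //.
  - by move=> x _ /=; rewrite lee_fin hc.
rewrite integral_cst //.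
by rewrite ltey_eq fin_numM // fin_num_measure.
Qed.

Lemma IntD f g : good f -> good g ->
  \int[mu]_x (f x + g x) = \int[mu]_x f x + \int[mu]_x g x.
Proof. by move=> gf gg; rewrite RintegralD //; exact: good_int. Qed.

Lemma IntZ f c : good f -> \int[mu]_x (c * f x) = c * \int[mu]_x f x.
Proof. by move=> gf; rewrite RintegralZl //; exact: good_int. Qed.

Lemma Int_sum (I : Type) (s : seq I) (Q : pred I) (F : I -> T -> R) :
  (forall i, Q i -> good (F i)) ->
  \int[mu]_x (\sum_(i <- s | Q i) F i x) = \sum_(i <- s | Q i) \int[mu]_x F i x.
Proof.
move=> hF; elim: s => [|a s ih].
  under eq_Rintegral do rewrite big_nil.
  by rewrite big_nil Rintegral_cst // mul0r.
under eq_Rintegral do rewrite big_cons.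
rewrite big_cons; case: ifPn => Qa; last exact: ih.
by rewrite IntD ?ih //; [exact: hF | exact: good_sum].
Qed.

Lemma Int_cst c : \int[mu]_x c = c.
Proof. by rewrite Rintegral_cst // muT mulr1. Qed.

Lemma Int_indic (A : set T) : measurable A ->
  \int[mu]_x (\1_A x : R) = fine (mu A).
Proof. by move=> mA; rewrite /Rintegral integral_indic // setIT. Qed.

Lemma Int_ge0 f : (forall x, 0 <= f x) -> 0 <= \int[mu]_x f x.
Proof. by move=> h; apply: Rintegral_ge0 => x _; exact: h. Qed.

Lemma Int_ae f g : good f -> good g -> {ae mu, forall x, f x = g x} ->
  \int[mu]_x f x = \int[mu]_x g x.
Proof.
move=> [mf _] [mg _] hae; congr fine; apply: ae_eq_integral => //.
- exact/measurable_EFinP.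
- exact/measurable_EFinP.
- by apply: filterS hae => x -> .
Qed.

Lemma Int_eq0 f : good f -> (forall x, 0 <= f x) -> \int[mu]_x f x = 0 ->
  {ae mu, forall x, f x = 0}.
Proof.
move=> gf f0 hI.
have fin := integrable_fin_num measurableT (good_int gf).
have h0 : (\int[mu]_(x in setT) (EFin \o f) x = 0)%E.
  by rewrite -(fineK fin); rewrite /Rintegral in hI; rewrite hI.
have : (\int[mu]_(x in setT) `|(EFin \o f) x| = 0)%E.
  by rewrite -h0; apply: eq_integral => x _ /=; rewrite ?gee0_abs ?ger0_norm ?lee_fin.
have mEf : measurable_fun setT (EFin \o f) by apply/measurable_EFinP; case: gf.
move/(ae_eq_integral_abs _ measurableT mEf) => h.
by apply: filterS h => x /(_ I) hx; apply/EFin_inj; exact: hx.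
Qed.
End gen.

Section alg.
Context (R : realType) (M : nat) (K : 'I_M -> 'I_M -> R).
Hypothesis Ksym : forall i j, K i j = K j i.
Hypothesis Kpsd : forall a : 'I_M -> R,
  0 <= \sum_(i < M) \sum_(j < M) a i * a j * K i j.
Hypothesis Kchar : forall a : 'I_M -> R, (exists i, a i != 0) ->
  \sum_(i < M) a i = 0 -> 0 < \sum_(i < M) \sum_(j < M) a i * a j * K i j.

Definition Qf (a : 'I_M -> R) := \sum_(i < M) \sum_(j < M) a i * a j * K i j.
Definition dd i j := K i i + K j j - 2 * K i j.

Lemma sum_delta (F : 'I_M -> R) u : \sum_j (j == u)%:R * F j = F u.
Proof.
rewrite (bigD1 u) //= eqxx mul1r big1 ?addr0 // => j /negbTE ->.
by rewrite mul0r.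
Qed.

Lemma sum_delta1 u : \sum_(j < M) (j == u)%:R = 1 :> R.
Proof.
transitivity (\sum_j (j == u)%:R * (fun=> 1 : R) j).
  by apply: eq_bigr => j _; rewrite mulr1.
exact: sum_delta.
Qed.

Lemma Q_delta u v : Qf (fun i => (i == u)%:R - (i == v)%:R) = dd u v.
Proof.
rewrite /Qf /dd.
transitivity (\sum_i ((i == u)%:R - (i == v)%:R) * (K i u - K i v)).
  apply: eq_bigr => i _.
  under eq_bigr do rewrite -mulrA.
  rewrite -mulr_sumr; congr (_ * _).
  under eq_bigr do rewrite mulrBl.
  by rewrite sumrB !(sum_delta (fun j => K i j)).
under eq_bigr do rewrite mulrBl.
rewrite sumrB (sum_delta (fun j => K j u - K j v)) (sum_delta (fun j => K j u - K j v)).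
rewrite (Ksym v u); ring.
Qed.

Lemma dd_ge0 u v : 0 <= dd u v.
Proof. by rewrite -Q_delta; apply: Kpsd. Qed.

Lemma dd_gt0 u v : u != v -> 0 < dd u v.
Proof.
move=> uv; rewrite -Q_delta; apply: Kchar.
  by exists u; rewrite eqxx (negbTE uv) subr0 oner_neq0.
by rewrite sumrB !sum_delta1 subrr.
Qed.

Lemma dd_diag u : dd u u = 0.
Proof. rewrite /dd; ring. Qed.

Lemma I1 (a : 'I_M -> R) : \sum_i \sum_j a i * a j * dd i j =
  2 * ((\sum_i a i) * (\sum_i a i * K i i) - Qf a).
Proof.
have e i j : a i * a j * dd i j =
    a i * K i i * a j + a i * (a j * K j j) - 2 * (a i * a j * K i j).
  by rewrite /dd; ring.
transitivity (\sum_i (a i * K i i * \sum_j a j + a i * \sum_j (a j * K j j)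
   - 2 * \sum_j a i * a j * K i j)).
  apply: eq_bigr => i _; under eq_bigr do rewrite e.
  by rewrite sumrB big_split /= !mulr_sumr.
rewrite sumrB big_split /= -!mulr_suml -mulr_sumr /Qf.
ring.
Qed.

Lemma Q_eq0 (a : 'I_M -> R) : \sum_i a i = 0 -> Qf a = 0 -> forall i, a i = 0.
Proof.
move=> s0 q0 i; apply/eqP; apply/negPn/negP => ai.
have := Kchar (ex_intro _ i ai) s0.
by rewrite -/(Qf a) q0 ltxx.
Qed.

Lemma dsum_eq0 (F : 'I_M -> 'I_M -> R) : (forall i j, 0 <= F i j) ->
  \sum_i \sum_j F i j = 0 -> forall i j, F i j = 0.
Proof.
move=> F0 s0 i j.
have h : \sum_j F i j = 0.
  move: s0; move/psumr_eq0P; apply => //.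
  by move=> k _; apply: sumr_ge0 => l _.
by move: h; move/psumr_eq0P; apply.
Qed.

End alg.

Section aux.
Context d (T : measurableType d) (R : realType).

Lemma aeS (mu : probability T R) (A B : T -> Prop) :
  (forall x, A x -> B x) -> {ae mu, forall x, A x} -> {ae mu, forall x, B x}.
Proof. by move=> h; apply: filterS. Qed.

Lemma aeS2 (mu : probability T R) (A B C : T -> Prop) :
  (forall x, A x -> B x -> C x) -> {ae mu, forall x, A x} ->
  {ae mu, forall x, B x} -> {ae mu, forall x, C x}.
Proof. by move=> h; apply: filterS2 h; exact: ae_filter_ringOfSetsType. Qed.

Lemma ae_forall (mu : probability T R) (I : finType) (A : I -> T -> Prop) :
  (forall i, {ae mu, forall x, A i x}) -> {ae mu, forall x, forall i, A i x}.
Proof.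
move=> h; apply: (@filter_forall T I (fun i x => A i x)) => //.
Qed.

Lemma ae_null (mu : probability T R) (A : set T) : measurable A ->
  mu (~` A) = 0%E -> {ae mu, forall x, A x}.
Proof.
move=> mA h; exists (~` A); split => //; first exact: measurableC.
Qed.

Lemma mset_lt (f g : T -> R) : measurable_fun setT f -> measurable_fun setT g ->
  measurable [set x | f x < g x].
Proof.
move=> mf mg.
have := measurable_fun_ltr mf mg measurableT (Y := [set true]) I.
by rewrite setTI.
Qed.

Lemma mset_le (f g : T -> R) : measurable_fun setT f -> measurable_fun setT g ->
  measurable [set x | f x <= g x].
Proof.
move=> mf mg.
have := measurable_fun_ler mf mg measurableT (Y := [set true]) I.
by rewrite setTI.
Qed.

End aux.


Section main.
Context (R : realType) (d : measure_display) (T : measurableType d)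
    (M : nat) (K : 'I_M -> 'I_M -> R) (pi : 'I_M -> R)
    (P : 'I_M -> probability T R) (p : 'I_M -> T -> R).
Hypothesis hM : (2 <= M)%N.
Hypothesis hK : characteristic_kernel K.
Hypothesis hpi : forall i, 0 < pi i < 1.
Hypothesis hsum : \sum_(i < M) pi i = 1.
Hypothesis hp : cond_label_prob pi P p.

Let Ksym : forall i j, K i j = K j i := hK.1.1.
Let Kpsd : forall a : 'I_M -> R,
  0 <= \sum_(i < M) \sum_(j < M) a i * a j * K i j := hK.1.2.
Let Kchar : forall a : 'I_M -> R, (exists i, a i != 0) ->
  \sum_(i < M) a i = 0 -> 0 < \sum_(i < M) \sum_(j < M) a i * a j * K i j
  := hK.2.

Lemma pi_gt0 i : 0 < pi i.
Proof. by case/andP: (hpi i). Qed.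

Lemma pi_neq0 i : pi i != 0.
Proof. by rewrite gt_eqF // pi_gt0. Qed.

Lemma p01 i x : 0 <= p i x <= 1.
Proof. exact: hp.2.1. Qed.

Lemma p_ge0 i x : 0 <= p i x.
Proof. by case/andP: (p01 i x). Qed.

Lemma good_p i : good (p i).
Proof.
split; first exact: hp.1.
by exists 1 => x; case/andP: (p01 i x) => h0 h1; rewrite ger0_norm.
Qed.

Ltac gd := repeat first [ exact: good_p | exact: good_cst
  | (apply: good_indic; assumption) | apply: goodD | apply: goodM
  | apply: goodN | (apply: good_sum => ? ?) ].

Definition L (f : T -> R) := \sum_(k < M) pi k * \int[P k]_x f x.

Lemma L_D f g : good f -> good g -> L (fun x => f x + g x) = L f + L g.
Proof.
move=> gf gg; rewrite /L -big_split /=; apply: eq_bigr => k _.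
by rewrite IntD // mulrDr.
Qed.

Lemma L_Z f c : good f -> L (fun x => c * f x) = c * L f.
Proof.
move=> gf; rewrite /L mulr_sumr; apply: eq_bigr => k _.
by rewrite IntZ // mulrCA.
Qed.

Lemma L_sum (I : Type) (s : seq I) (Q : pred I) (F : I -> T -> R) :
  (forall i, Q i -> good (F i)) ->
  L (fun x => \sum_(i <- s | Q i) F i x) = \sum_(i <- s | Q i) L (F i).
Proof.
move=> hF; rewrite /L.
under eq_bigr => k _ do rewrite (Int_sum _ _ hF) mulr_sumr.
exact: exchange_big.
Qed.

Lemma L_cst c : L (fun=> c) = c.
Proof.
rewrite /L; under eq_bigr do rewrite Int_cst.
by rewrite -mulr_suml hsum mul1r.
Qed.

Lemma L_ge0 f : (forall x, 0 <= f x) -> 0 <= L f.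
Proof.
move=> f0; apply: sumr_ge0 => k _; apply: mulr_ge0; first exact: ltW (pi_gt0 k).
exact: Int_ge0.
Qed.

Lemma L_ae f g : good f -> good g ->
  (forall k, {ae P k, forall x, f x = g x}) -> L f = L g.
Proof.
move=> gf gg h; apply: eq_bigr => k _; congr (_ * _); exact: Int_ae.
Qed.

Lemma L_eq0 f : good f -> (forall x, 0 <= f x) -> L f = 0 ->
  forall k, {ae P k, forall x, f x = 0}.
Proof.
move=> gf f0 h k; apply: Int_eq0 => //.
have : pi k * \int[P k]_x f x = 0.
  move: h; rewrite /L; move/psumr_eq0P; apply => // j _.
  by apply: mulr_ge0; [exact: ltW (pi_gt0 j) | exact: Int_ge0].
by move/eqP; rewrite mulf_eq0 (negbTE (pi_neq0 k)) /= => /eqP.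
Qed.

Lemma finP i (A : set T) : measurable A -> P i A = (fine (P i A))%:E.
Proof. by move=> mA; rewrite fineK // fin_num_measure. Qed.

Lemma L_ind i (A : set T) : measurable A ->
  pi i * fine (P i A) = L (fun x => p i x * \1_A x).
Proof.
move=> mA; have := hp.2.2 i A mA.
have e k : ((pi k)%:E * \int[P k]_(x in A) (p i x)%:E)%E =
    (pi k * \int[P k]_x (p i x * \1_A x))%:E.
  rewrite integral_mkcond (eq_integral (fun x => (p i x * \1_A x)%:E)); last first.
    move=> x _; rewrite patchE indicE; case: (x \in A) => /=.
      by rewrite mulr1.
    by rewrite mulr0.
  have gi : good (fun x => p i x * \1_A x) by gd.
  rewrite -(fineK (integrable_fin_num measurableT (good_int (P k) gi))).
  by rewrite -EFinM.
under eq_bigr => k _ do rewrite e.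
move=> h; apply/EFin_inj; rewrite EFinM -(finP i mA) h sumEFin //.
Qed.

Lemma L_p i : L (p i) = pi i.
Proof.
have := L_ind i measurableT.
rewrite (_ : (fun x => p i x * \1_setT x) = p i); last first.
  by apply/funext => x; rewrite indicE in_setT mulr1.
by move=> <-; rewrite muT mulr1.
Qed.

Lemma L_indic (A : set T) : measurable A ->
  L (fun x => \1_A x) = \sum_k pi k * fine (P k A).
Proof. by move=> mA; apply: eq_bigr => k _; rewrite Int_indic. Qed.

Lemma abs_trick h : good h ->
  (forall A, measurable A -> L (fun x => h x * \1_A x) = 0) ->
  forall k, {ae P k, forall x, h x = 0}.
Proof.
move=> gh hA.
have mh := gh.1.
pose A := [set x | 0 < h x]; pose B := [set x | h x < 0].
have mA : measurable A by apply: mset_lt => //; exact: measurable_cst.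
have mB : measurable B by apply: mset_lt => //; exact: measurable_cst.
have e : (fun x => `|h x|) =
    (fun x => h x * \1_A x + (-1) * (h x * \1_B x)).
  apply/funext => x; rewrite !indicE.
  case: (ltrgtP 0 (h x)) => hx.
  - rewrite (mem_set (hx : A x)) memNset /B /=; last by rewrite ltNge ltW.
    by rewrite mulr1 mulr0 mulr0 addr0 gtr0_norm.
  - rewrite (mem_set (hx : B x)) memNset /A /=; last by rewrite ltNge ltW.
    by rewrite mulr1 mulr0 add0r ltr0_norm // mulN1r.
  - by rewrite -hx normr0 !mul0r mulr0 addr0.
have gabs : good (fun x => `|h x|) by rewrite e; gd.
have : L (fun x => `|h x|) = 0.
  rewrite e L_D; last 2 first.
  - by gd.
  - by gd.
  by rewrite L_Z; [rewrite !hA // mulr0 addr0 | gd].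
move/(L_eq0 gabs (fun x => normr_ge0 _)) => h0 k.
by apply: aeS (h0 k) => x /normr0_eq0.
Qed.

Lemma s1 k : {ae P k, forall x, \sum_i p i x = 1}.
Proof.
have gh : good (fun x => 1 - \sum_i p i x) by gd.
suff H : forall A, measurable A ->
    L (fun x => (1 - \sum_i p i x) * \1_A x) = 0.
  by apply: aeS (abs_trick gh H k) => x /eqP; rewrite subr_eq0 => /eqP <-.
move=> A mA.
rewrite (_ : (fun x => _) = fun x => \1_A x + (-1) * \sum_i (p i x * \1_A x)); last first.
  by apply/funext => x; rewrite -mulr_suml; ring.
rewrite L_D; [|gd|gd]; rewrite L_Z; last by gd.
rewrite L_sum; last by move=> i _; gd.
rewrite L_indic //.
under [X in _ + _ * X]eq_bigr => i _ do rewrite -L_ind //.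
by rewrite mulN1r subrr.
Qed.

Definition Lpp i j := L (fun x => p i x * p j x).

Lemma EKc : EK_cond K pi P p = \sum_i \sum_j K i j * Lpp i j.
Proof.
rewrite (_ : EK_cond K pi P p =
   L (fun x => \sum_i \sum_j K i j * p i x * p j x)) //.
rewrite L_sum; last by move=> i _; gd.
apply: eq_bigr => i _; rewrite L_sum; last by move=> j _; gd.
apply: eq_bigr => j _; rewrite /Lpp -L_Z; last by gd.
by congr L; apply/funext => x; rewrite mulrA.
Qed.

Definition q x := Qf K (fun i => p i x - pi i).

Lemma good_q : good q.
Proof. rewrite /q /Qf; gd. Qed.

Lemma Lq : L q = EK_cond K pi P p - EK_indep K pi.
Proof.
rewrite EKc /EK_indep -sumrB.
rewrite /q /Qf L_sum; last by move=> i _; gd.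
apply: eq_bigr => i _; rewrite -sumrB L_sum; last by move=> j _; gd.
apply: eq_bigr => j _.
rewrite (_ : (fun x => _) = fun x => K i j * (p i x * p j x) +
   ((- (K i j * pi i)) * p j x + ((- (K i j * pi j)) * p i x
     + pi i * pi j * K i j))); last first.
  by apply/funext => x; ring.
rewrite L_D; [|gd|gd]. rewrite L_D; [|gd|gd]. rewrite L_D; [|gd|gd].
rewrite !L_Z; try by gd.
rewrite !L_p L_cst /Lpp; ring.
Qed.

Definition r2 x := \sum_i \sum_j p i x * p j x * dd K i j.

Lemma good_r2 : good r2.
Proof. rewrite /r2 /dd; gd. Qed.

Lemma Lr : L r2 = 2 * (EK_diag K pi - EK_cond K pi P p).
Proof.
have e : L r2 = L (fun x => 2 * (\sum_i p i x * K i i - Qf K (fun i => p i x))).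
  apply: L_ae; [exact: good_r2 | rewrite /Qf; gd |] => k.
  apply: aeS (s1 k) => x sx.
  by rewrite /r2 I1 // sx mul1r.
rewrite e L_Z; last by rewrite /Qf; gd.
rewrite L_D; [|gd|rewrite /Qf; gd].
rewrite (_ : (fun x => - Qf K (fun i => p i x)) =
   fun x => (-1) * Qf K (fun i => p i x)); last first.
  by apply/funext => x; rewrite mulN1r.
rewrite [X in _ + X]L_Z; last by rewrite /Qf; gd.
rewrite L_sum; last by move=> i _; gd.
have h1 : \sum_i L (fun x => p i x * K i i) = EK_diag K pi.
  rewrite /EK_diag; apply: eq_bigr => i _.
  rewrite (_ : (fun x => p i x * K i i) = fun x => K i i * p i x).
    by rewrite L_Z; [rewrite L_p mulrC | gd].
  by apply/funext => x; rewrite mulrC.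
have h2 : L (fun x => Qf K (fun i => p i x)) = EK_cond K pi P p.
  rewrite /EK_cond /L.
  apply: eq_bigr => k _; congr (_ * _); congr fine.
  apply: eq_integral => x _; congr EFin; rewrite /Qf.
  by apply: eq_bigr => i _; apply: eq_bigr => j _; ring.
by rewrite h1 h2 mulN1r.
Qed.

Lemma q_ge0 x : 0 <= q x.
Proof. exact: Kpsd. Qed.

Lemma r2_ge0 x : 0 <= r2 x.
Proof.
apply: sumr_ge0 => i _; apply: sumr_ge0 => j _.
apply: mulr_ge0; first by apply: mulr_ge0; exact: p_ge0.
exact: (dd_ge0 Ksym Kpsd i j).
Qed.

Definition Dn := EK_diag K pi - EK_indep K pi.
Definition Nn := EK_cond K pi P p - EK_indep K pi.

Lemma D2 : 2 * Dn = \sum_i \sum_j pi i * pi j * dd K i j.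
Proof. by rewrite I1 hsum mul1r. Qed.

Lemma Dpos : 0 < Dn.
Proof.
pose i0 : 'I_M := Ordinal (ltnW hM).
pose i1 : 'I_M := Ordinal hM.
have nn : forall i j, 0 <= pi i * pi j * dd K i j.
  move=> i j; apply: mulr_ge0; last exact: (dd_ge0 Ksym Kpsd _ _).
  by apply: mulr_ge0; exact: ltW (pi_gt0 _).
have hge : 0 <= \sum_i \sum_j pi i * pi j * dd K i j.
  by apply: sumr_ge0 => i _; apply: sumr_ge0 => j _.
have : 0 < \sum_i \sum_j pi i * pi j * dd K i j.
  rewrite lt_neqAle hge andbT; apply/eqP => /esym h0.
  have := dsum_eq0 nn h0 i0 i1.
  move/eqP; rewrite !mulf_eq0 !(negbTE (pi_neq0 _)) /= gt_eqF //.
  by apply: (dd_gt0 Ksym Kchar).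
by rewrite -D2 pmulr_rgt0.
Qed.

Lemma sq0 (a : 'I_M -> R) : \sum_j a j * a j <= 0 -> forall j, a j = 0.
Proof.
move=> h j.
have h0 : \sum_j a j * a j = 0.
  by apply: le_anti; rewrite h /=; apply: sumr_ge0 => k _; rewrite -expr2 sqr_ge0.
have : a j * a j = 0.
  by move: h0; move/psumr_eq0P; apply => // k _; rewrite -expr2 sqr_ge0.
by move/eqP; rewrite mulf_eq0 orbb => /eqP.
Qed.

Lemma KMDE : KMD K pi P p = Nn / Dn.
Proof. by []. Qed.

Lemma NnE : Nn = L q.
Proof. by rewrite Lq. Qed.

Lemma DNE : L r2 = 2 * (Dn - Nn).
Proof. by rewrite Lr /Dn /Nn; congr (_ * _); ring. Qed.

Lemma part1 : 0 <= KMD K pi P p <= 1.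
Proof.
have N0 : 0 <= Nn by rewrite NnE; apply: L_ge0; exact: q_ge0.
have ND : Nn <= Dn.
  have := L_ge0 r2_ge0; rewrite DNE pmulr_rge0 // subr_ge0.
  by [].
rewrite KMDE; apply/andP; split; first exact: divr_ge0 N0 (ltW Dpos).
by rewrite ler_pdivrMr ?Dpos // mul1r.
Qed.

Lemma Dn_neq0 : Dn != 0.
Proof. by rewrite gt_eqF // Dpos. Qed.

Lemma part2 : KMD K pi P p = 0 <->
  (forall i j (A : set T), measurable A -> P i A = P j A).
Proof.
rewrite KMDE; split.
- move/eqP; rewrite mulf_eq0 invr_eq0 (negbTE Dn_neq0) orbF => /eqP N0.
  have hq := L_eq0 good_q q_ge0 (etrans (esym NnE) N0).
  have hpe k : {ae P k, forall x, forall i, p i x = pi i}.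
    apply: aeS2 (hq k) (s1 k) => x qx sx i.
    apply/eqP; rewrite -subr_eq0; apply/eqP.
    apply: (Q_eq0 Kchar (a := fun i => p i x - pi i)) => //.
    by rewrite sumrB sx hsum subrr.
  have key i (A : set T) : measurable A -> fine (P i A) = L (fun x => \1_A x).
    move=> mA; have := L_ind i mA.
    rewrite (@L_ae _ (fun x => pi i * \1_A x)); [|gd|gd|]; last first.
      by move=> k; apply: aeS (hpe k) => x ->.
    by rewrite L_Z; [move/mulfI; apply; exact: pi_neq0 | gd].
  move=> i j A mA; rewrite (finP i mA) (finP j mA).
  by rewrite (key i A mA) (key j A mA).
- move=> H.
  have hpe i k : {ae P k, forall x, p i x - pi i = 0}.
    apply: abs_trick; first by gd.
    move=> A mA.
    rewrite (_ : (fun x => _) = fun x => p i x * \1_A x + (- pi i) * \1_A x);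
      last by apply/funext => x; ring.
    rewrite L_D; [|gd|gd]; rewrite L_Z; last by gd.
    rewrite -L_ind // L_indic //.
    under eq_bigr => l _ do rewrite (H l i A mA).
    by rewrite -mulr_suml hsum mul1r mulNr subrr.
  have hq : L q = L (fun=> 0).
    apply: L_ae; [exact: good_q | gd |] => k.
    apply: aeS (ae_forall (fun i => hpe i k)) => x h.
    rewrite /q /Qf big1 // => i _; rewrite big1 // => j _.
    by rewrite h mul0r mul0r.
  by rewrite NnE hq L_cst mul0r.
Qed.

Lemma NDiff : Nn = Dn <-> L r2 = 0.
Proof.
rewrite DNE; split; first by move=> ->; rewrite subrr mulr0.
by move/eqP; rewrite mulf_eq0 pnatr_eq0 /= subr_eq0 => /eqP ->.
Qed.

Lemma part3 : KMD K pi P p = 1 <->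
  exists A : 'I_M -> set T,
    [/\ forall i, measurable (A i),
        forall i j, i != j -> A i `&` A j = set0 &
        forall i, P i (A i) = 1%E].
Proof.
rewrite KMDE; split.
- move=> h1.
  have NeD : Nn = Dn.
    by move: h1 => /(congr1 (fun y => y * Dn)); rewrite divfK ?Dn_neq0 // mul1r.
  have hr := L_eq0 good_r2 r2_ge0 (proj1 NDiff NeD).
  have orth k : {ae P k, forall x, forall a b, a != b -> p a x * p b x = 0}.
    apply: aeS (hr k) => x rx a b ab.
    have nn : forall i j, 0 <= p i x * p j x * dd K i j.
      move=> i j; apply: mulr_ge0; last exact: (dd_ge0 Ksym Kpsd _ _).
      by apply: mulr_ge0; exact: p_ge0.
    have := dsum_eq0 nn rx a b.
    move/eqP; rewrite mulf_eq0 (gt_eqF (dd_gt0 Ksym Kchar ab)) orbF.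
    by move/eqP.
  pose A i := [set x | \sum_j (p j x - (j == i)%:R) * (p j x - (j == i)%:R) <= 0].
  have mA i : measurable (A i).
    have g : good (fun x => \sum_j (p j x - (j == i)%:R) * (p j x - (j == i)%:R)).
      by gd.
    exact: mset_le g.1 (measurable_cst _).
  exists A; split => //.
  + move=> i j ij; apply/seteqP; split => x //= [hi hj].
    have := sq0 hi i; have := sq0 hj i.
    rewrite eqxx (negbTE ij) subr0 => -> /eqP.
    by rewrite subr_eq0 eq_sym oner_eq0.
  + move=> i.
    have mAc : measurable (~` A i) by exact: measurableC.
    have hz : pi i * fine (P i (~` A i)) = 0.
      rewrite L_ind //.
      rewrite (@L_ae _ (fun=> 0)); [|gd|gd|]; first by rewrite L_cst.
      move=> k; apply: aeS2 (orth k) (s1 k) => x ox sx.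
      rewrite indicE; case: (eqVneq (p i x) 0) => [-> | pnz]; first by rewrite mul0r.
      have pj0 j : j != i -> p j x = 0.
        move=> ji; have := ox i j; rewrite eq_sym => /(_ ji) /eqP.
        by rewrite mulf_eq0 (negbTE pnz) /= => /eqP.
      have pj j : p j x = (j == i)%:R.
        case: (eqVneq j i) => [-> | ji]; last by rewrite pj0.
        have e : \sum_(j' < M | j' != i) p j' x = 0.
          by rewrite big1 // => j' /pj0.
        by move: sx; rewrite (bigD1 i) //= e addr0 ?eqxx => ->.
      have Ax : x \in A i.
        apply: mem_set; rewrite /A /= big1 // => j _.
        by rewrite pj subrr mul0r.
      by rewrite in_setC Ax mulr0.
    move/eqP: hz; rewrite mulf_eq0 (negbTE (pi_neq0 i)) /= => /eqP.
    rewrite probability_setC // (finP i (mA i)) -EFinB /= => /eqP.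
    rewrite subr_eq0 => /eqP <- //.
- move=> [A [mA disj PA]].
  have PAc i : P i (~` A i) = 0%E.
    by rewrite probability_setC // PA subee.
  have Pij i k : i != k -> P i (A k) = 0%E.
    move=> ik; apply: (subset_measure0 (mA k) (measurableC (mA i))) (PAc i).
    move=> x Akx Aix; have := disj i k ik.
    by move/seteqP => [+ _] => /(_ x (conj Aix Akx)).
  have hz i k : i != k -> {ae P k, forall x, p i x * \1_(A k) x = 0}.
    move=> ik.
    have : L (fun x => p i x * \1_(A k) x) = 0.
      by rewrite -L_ind // Pij // mulr0.
    have mAk := mA k.
    move=> h0; apply: (L_eq0 _ _ h0) => [|x]; first by gd.
    by rewrite indicE mulr_ge0 ?p_ge0 ?ler0n.
  have hAk k : {ae P k, forall x, A k x} := ae_null (mA k) (PAc k).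
  have hzero k : {ae P k, forall x, forall i, i != k -> p i x = 0}.
    have h1 : forall i, {ae P k, forall x, i != k -> p i x * \1_(A k) x = 0}.
      move=> i; case: (eqVneq i k) => [-> | ik].
        by apply: aeW => x /=.
      by apply: aeS (hz i k ik) => x h _.
    apply: aeS2 (ae_forall h1) (hAk k) => x h Akx i ik.
    by have := h i ik; rewrite indicE mem_set // mulr1.
  have hr : L r2 = L (fun=> 0).
    apply: L_ae; [exact: good_r2 | gd |] => k.
    apply: aeS (hzero k) => x h.
    rewrite /r2 big1 // => i _; rewrite big1 // => j _.
    case: (eqVneq i j) => [<- | ij]; first by rewrite dd_diag mulr0.
    case: (eqVneq i k) => [ik | ik]; last by rewrite (h i ik) !mul0r.
    by rewrite (h j) ?mulr0 ?mul0r // -ik eq_sym.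
  have NeD : Nn = Dn by apply/NDiff; rewrite hr L_cst.
  by rewrite NeD divff // Dn_neq0.
Qed.

End main.

Unset Implicit Arguments.

Theorem theorem1 (R : realType) (d : measure_display) (T : measurableType d)
    (M : nat) (K : 'I_M -> 'I_M -> R) (pi : 'I_M -> R)
    (P : 'I_M -> probability T R) (p : 'I_M -> T -> R) :
  (2 <= M)%N ->
  characteristic_kernel K ->
  (forall i, 0 < pi i < 1) ->
  \sum_(i < M) pi i = 1 ->
  cond_label_prob pi P p ->
  [/\ 0 <= KMD K pi P p <= 1,
      KMD K pi P p = 0 <->
        (forall i j (A : set T), measurable A -> P i A = P j A) &
      KMD K pi P p = 1 <->
        exists A : 'I_M -> set T,
          [/\ forall i, measurable (A i),
              forall i j, i != j -> A i `&` A j = set0 &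
              forall i, P i (A i) = 1%E]].
Proof.
move=> hM hK hpi hsum hp.
by split; [apply: part1 | apply: part2 | apply: part3].
Qed.
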